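(* Let $k\ge2$ and $\sigma_i=\frac{i(k-i)}2$ for $i=0,\dots,k$. For $\boldsymbol\xi=(\xi_1,\dots,\xi_k)\in\mathbb{R}^k$ set $b_1=b_{k+1}=0$ and $b_i=\sigma_{i-1}\big(e^{-(\xi_i-\xi_{i-1})}-1\big)$ for $i=2,\dots,k$, and consider the system $\dot\xi_i=b_i-b_{i+1}$, $i=1,\dots,k$. Then: (a) the only critical point of this system on the hyperplane $\{\sum_{i=1}^k\xi_i=0\}$ is $\boldsymbol\xi=0$; (b) for any solution $\boldsymbol\xi(\tau)$ on its maximal interval $[0,\tau_\infty)$ with $\sum_{i=1}^k\xi_i(0)=0$, the functions $B(\tau)=\max\{b_i(\tau):1\le i\le k+1\}$ and $-b(\tau)$, where $b(\tau)=\min\{b_i(\tau):1\le i\le k+1\}$, are nonincreasing in $\tau$; moreover $B-b$ is strictly decreasing, unless $\xi_1\equiv\dots\equiv\xi_k\equiv0$. *)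

(* Defs.v *)
From Stdlib Require Import Reals Lra List.
From Coquelicot Require Import Coquelicot.
Open Scope R_scope.

(* Vectors xi = (xi_1,...,xi_k) are encoded as functions nat -> R,
   only the indices 1..k being relevant. *)

Definition sigma (k i : nat) : R := INR i * (INR k - INR i) / 2.

Definition bcoef (k : nat) (xi : nat -> R) (i : nat) : R :=
  if andb (Nat.leb 2 i) (Nat.leb i k)
  then sigma k (i - 1) * (exp (- (xi i - xi (i - 1)%nat)) - 1)
  else 0.

Definition rhs (k : nat) (xi : nat -> R) (i : nat) : R :=
  bcoef k xi i - bcoef k xi (S i).

Definition vsum (k : nat) (xi : nat -> R) : R :=
  fold_right Rplus 0 (map xi (seq 1 k)).

Definition Bmax (k : nat) (xi : nat -> R) : R :=
  fold_right Rmax (bcoef k xi 1) (map (bcoef k xi) (seq 1 (S k))).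
Definition bmin (k : nat) (xi : nat -> R) : R :=
  fold_right Rmin (bcoef k xi 1) (map (bcoef k xi) (seq 1 (S k))).

Definition is_right_derive (f : R -> R) (x l : R) : Prop :=
  filterlim (fun h => (f (x + h) - f x) / h) (at_right 0) (locally l).

Definition is_solution (k : nat) (xi : R -> nat -> R) (T : Rbar) : Prop :=
  forall i, (1 <= i <= k)%nat ->
    is_right_derive (fun t => xi t i) 0 (rhs k (xi 0) i) /\
    forall t, 0 < t -> Rbar_lt t T ->
      is_derive (fun s => xi s i) t (rhs k (xi t) i).

Definition is_maximal_solution (k : nat) (xi : R -> nat -> R) (T : Rbar) : Prop :=
  Rbar_lt 0 T /\ is_solution k xi T /\
  forall (T' : Rbar) (y : R -> nat -> R),
    Rbar_lt T T' -> is_solution k y T' ->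
    ~ (forall t, 0 <= t -> Rbar_lt t T -> forall i, (1 <= i <= k)%nat -> y t i = xi t i).

(* Main.v *)
Require Import Defs.
From Stdlib Require Import Reals Lra List.
From Stdlib Require Import Lia.
From Coquelicot Require Import Coquelicot.
Open Scope R_scope.


Definition mx (f : nat -> R) (l : list nat) (j0 : nat) : R :=
  fold_right Rmax (f j0) (map f l).

Lemma mx_ge0 f l j0 : f j0 <= mx f l j0.
Proof. unfold mx; induction l; simpl; [lra|]. eapply Rle_trans; [exact IHl| apply Rmax_r]. Qed.

Lemma mx_ge f l j0 j : In j l -> f j <= mx f l j0.
Proof.
  unfold mx; induction l as [|a l IH]; simpl; [tauto|].
  intros [->|H]. apply Rmax_l. eapply Rle_trans; [apply IH, H| apply Rmax_r].
Qed.

Lemma mx_le f l j0 c : f j0 <= c -> (forall j, In j l -> f j <= c) -> mx f l j0 <= c.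
Proof. unfold mx; induction l as [|a l IH]; simpl; intros H0 H; [lra|]. apply Rmax_lub; auto. Qed.

Lemma mx_lt f l j0 c : f j0 < c -> (forall j, In j l -> f j < c) -> mx f l j0 < c.
Proof. unfold mx; induction l as [|a l IH]; simpl; intros H0 H; [lra|]. apply Rmax_lub_lt; auto. Qed.

Lemma mx_att f l j0 : exists j, (j = j0 \/ In j l) /\ mx f l j0 = f j.
Proof.
  unfold mx; induction l as [|a l IH]; simpl. exists j0; auto.
  destruct IH as [j [Hj E]]. rewrite E.
  destruct (Rle_dec (f a) (f j)).
  exists j; rewrite Rmax_right; tauto. exists a; rewrite Rmax_left; auto; lra.
Qed.

Lemma mx_att' f l j0 : In j0 l -> exists j, In j l /\ mx f l j0 = f j.
Proof. intros H. destruct (mx_att f l j0) as [j [[->|Hj] E]]; eauto. Qed.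

Lemma mx_shift f l j0 c : mx (fun j => f j - c) l j0 = mx f l j0 - c.
Proof.
  unfold mx; induction l as [|a l IH]; simpl; [lra|]. rewrite IH.
  unfold Rmax; destruct Rle_dec; destruct Rle_dec; lra.
Qed.

Lemma mx_single f j : mx f (j :: nil) j = f j.
Proof. unfold mx; simpl. unfold Rmax; destruct Rle_dec; lra. Qed.

Lemma min_mx f l j0 : fold_right Rmin (f j0) (map f l) = - mx (fun j => - f j) l j0.
Proof.
  unfold mx; induction l as [|a l IH]; simpl; [lra|]. rewrite IH.
  unfold Rmax, Rmin; destruct Rle_dec; destruct Rle_dec; lra.
Qed.

Lemma fin_delta (L : list nat) (P : nat -> R -> Prop) :
  (forall j d d', 0 < d' <= d -> P j d -> P j d') ->
  (forall j, In j L -> exists d, 0 < d /\ P j d) ->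
  exists d, 0 < d /\ forall j, In j L -> P j d.
Proof.
  intros Hm. induction L as [|a L IH]; intros H.
  - exists 1; split; [lra| simpl; tauto].
  - destruct (H a (or_introl eq_refl)) as [d1 [Hd1 P1]].
    destruct IH as [d2 [Hd2 P2]]. intros j Hj; apply H; right; auto.
    exists (Rmin d1 d2). split. apply Rmin_pos; auto.
    intros j [<-|Hj]. apply (Hm _ d1); auto. split. apply Rmin_pos; auto. apply Rmin_l.
    apply (Hm _ d2); auto. split. apply Rmin_pos; auto. apply Rmin_r.
Qed.

Lemma alg_bound A h l : h <> 0 -> Rabs (A / h - l) < 1 -> Rabs A < (Rabs l + 1) * Rabs h.
Proof.
  intros Hh H.
  assert (E : A = (A / h) * h) by (field; auto).
  rewrite E, Rabs_mult.
  assert (Rabs (A / h) < Rabs l + 1).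
  { replace (A / h) with ((A / h - l) + l) by ring.
    eapply Rle_lt_trans. apply Rabs_triang. lra. }
  apply Rmult_lt_compat_r; auto. apply Rabs_pos_lt; auto.
Qed.

Lemma dpl_cont f x l : derivable_pt_lim f x l ->
  forall e, 0 < e -> exists d, 0 < d /\ forall y, Rabs (y - x) < d -> Rabs (f y - f x) < e.
Proof.
  intros H e He. destruct (H 1 Rlt_0_1) as [[d Hd] Hh]. simpl in Hh.
  assert (Hl : 0 < Rabs l + 1) by (generalize (Rabs_pos l); lra).
  exists (Rmin d (e / (Rabs l + 1))). split. apply Rmin_pos; auto. apply Rdiv_lt_0_compat; auto.
  intros y Hy. destruct (Req_dec y x) as [->|Hne]. rewrite Rminus_diag, Rabs_R0; lra.
  assert (Hy1 : Rabs (y - x) < d) by (eapply Rlt_le_trans; [exact Hy| apply Rmin_l]).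
  assert (Hy2 : Rabs (y - x) < e / (Rabs l + 1)) by (eapply Rlt_le_trans; [exact Hy| apply Rmin_r]).
  specialize (Hh (y - x)). replace (x + (y - x)) with y in Hh by ring.
  assert (Hb := alg_bound (f y - f x) (y - x) l ltac:(intro; apply Hne; lra) (Hh ltac:(intro; apply Hne; lra) Hy1)).
  eapply Rlt_trans. exact Hb.
  apply (Rmult_lt_compat_l (Rabs l + 1)) in Hy2; auto.
  replace ((Rabs l + 1) * (e / (Rabs l + 1))) with e in Hy2 by (field; lra). exact Hy2.
Qed.

Lemma neg_deriv f x l : derivable_pt_lim f x l -> l < 0 ->
  exists d, 0 < d /\ forall h, 0 < h < d -> f (x + h) < f x.
Proof.
  intros H Hl. assert (He : 0 < - l / 2) by lra.
  destruct (H _ He) as [[d Hd] Hh]. simpl in Hh. exists d. split; auto.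
  intros h [H1 H2]. specialize (Hh h ltac:(lra) ltac:(rewrite Rabs_pos_eq; lra)).
  apply Rabs_def2 in Hh. destruct Hh as [Ha _].
  set (A := f (x + h) - f x) in *.
  assert (A / h < 0) by lra.
  assert (E : A = (A / h) * h) by (field; lra).
  assert (A < 0) by (rewrite E; nra). unfold A in *; lra.
Qed.

Lemma dpl_lin f x l c a : derivable_pt_lim f x l ->
  derivable_pt_lim (fun u => f u - c * (u - a)) x (l - c).
Proof.
  intros H.
  assert (H2 : derivable_pt_lim (fun u => c * (u - a)) x c).
  { apply is_derive_Reals. auto_derive; auto; ring. }
  exact (derivable_pt_lim_minus f _ x l c H H2).
Qed.

Lemma MP (F D : nat -> R -> R) (L : list nat) (j0 : nat) (a b : R) :
  In j0 L -> a <= b ->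
  (forall j u, In j L -> a <= u <= b -> derivable_pt_lim (F j) u (D j u)) ->
  (forall j u, In j L -> a <= u <= b -> F j u = mx (fun i => F i u) L j0 -> D j u <= 0) ->
  mx (fun i => F i b) L j0 <= mx (fun i => F i a) L j0.
Proof.
  intros Hj0 Hab Hd Hmax.
  set (Ma := mx (fun i => F i a) L j0).
  set (Mb := mx (fun i => F i b) L j0).
  destruct (Rle_lt_dec Mb Ma) as [|Hlt]; [auto|exfalso].
  assert (Hab' : a < b). { destruct Hab as [|E]; auto. subst Mb Ma. rewrite E in Hlt; lra. }
  set (eps := (Mb - Ma) / (2 * (b - a))).
  assert (Heps : 0 < eps) by (unfold eps; apply Rdiv_lt_0_compat; lra).
  set (G := fun j u => F j u - eps * (u - a)).
  assert (HG : forall u, mx (fun i => G i u) L j0 = mx (fun i => F i u) L j0 - eps * (u - a)).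
  { intro u. unfold G. apply (mx_shift (fun i => F i u)). }
  assert (HdG : forall j u, In j L -> a <= u <= b -> derivable_pt_lim (G j) u (D j u - eps)).
  { intros j u Hj Hu. apply dpl_lin. auto. }
  set (mg := fun u => mx (fun i => G i u) L j0).
  set (E := fun u => a <= u <= b /\ mg u <= Ma).
  assert (HE : bound E) by (exists b; intros x [[_ ?] _]; auto).
  assert (HEa : exists x, E x).
  { exists a. split. lra. unfold mg; rewrite HG. fold Ma. lra. }
  destruct (completeness E HE HEa) as [u1 [Hub Hlub]].
  assert (Hau1 : a <= u1) by (apply Hub; destruct HEa as [x Hx]; split; [lra|]; unfold mg; rewrite HG; fold Ma; lra).
  assert (Hu1b : u1 <= b) by (apply Hlub; intros x [[_ ?] _]; auto).
  assert (Hcont : forall u, a <= u <= b -> forall e, 0 < e -> exists d, 0 < d /\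
            forall y, Rabs (y - u) < d -> Rabs (mg y - mg u) < e).
  { intros u Hu e He.
    destruct (fin_delta L (fun j d => forall y, Rabs (y - u) < d -> Rabs (G j y - G j u) < e / 2))
      as [d [Hd0 Hdd]].
    - intros j d d' Hd' P y Hy. apply P. lra.
    - intros j Hj. apply (dpl_cont _ _ _ (HdG j u Hj Hu)). lra.
    - exists d. split; [exact Hd0|]. intros y Hy.
      assert (A1 : mg y <= mg u + e / 2).
      { apply mx_le. assert (Hh := Hdd j0 Hj0 y Hy). apply Rabs_def2 in Hh.
        assert (G j0 u <= mg u) by (unfold mg; apply (mx_ge0 (fun i => G i _))). lra.
        intros j Hj. assert (Hh := Hdd j Hj y Hy). apply Rabs_def2 in Hh.
        assert (G j u <= mg u) by (unfold mg; apply (mx_ge (fun i => G i _)); auto). lra. }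
      assert (A2 : mg u <= mg y + e / 2).
      { apply mx_le. assert (Hh := Hdd j0 Hj0 y Hy). apply Rabs_def2 in Hh.
        assert (G j0 y <= mg y) by (unfold mg; apply (mx_ge0 (fun i => G i _))). lra.
        intros j Hj. assert (Hh := Hdd j Hj y Hy). apply Rabs_def2 in Hh.
        assert (G j y <= mg y) by (unfold mg; apply (mx_ge (fun i => G i _)); auto). lra. }
      apply Rabs_def1; lra. }
  assert (Hmu1 : mg u1 <= Ma).
  { destruct (Rle_lt_dec (mg u1) Ma) as [|Hc]; auto. exfalso.
    destruct (Hcont u1 ltac:(lra) (mg u1 - Ma) ltac:(lra)) as [d [Hd0 Hdd]].
    assert (u1 <= u1 - d / 2); [|lra].
    apply Hlub. intros x [Hx Hmx].
    destruct (Rle_lt_dec x (u1 - d/2)) as [|Hx2]; auto. exfalso.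
    assert (x <= u1) by (apply Hub; split; auto).
    specialize (Hdd x ltac:(apply Rabs_def1; lra)). apply Rabs_def2 in Hdd. lra. }
  assert (Hmb : mg b > Ma).
  { unfold mg; rewrite HG. fold Mb. unfold eps.
    replace ((Mb - Ma) / (2 * (b - a)) * (b - a)) with ((Mb - Ma)/2) by (field; lra). lra. }
  assert (Hu1b' : u1 < b).
  { destruct Hu1b as [|E1]; auto. rewrite E1 in Hmu1. lra. }
  destruct (fin_delta L (fun j d => forall h, 0 < h < d -> G j (u1 + h) <= Ma)) as [d [Hd0 Hdd]].
  - intros j d d' Hd' P h Hh. apply P. lra.
  - intros j Hj.
    assert (Hle : G j u1 <= mg u1) by (unfold mg; apply (mx_ge (fun i => G i _)); auto).
    destruct Hle as [Hlt2|Heq].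
    + destruct (dpl_cont _ _ _ (HdG j u1 Hj ltac:(lra)) (mg u1 - G j u1) ltac:(lra)) as [d [Hd0 Hdd]].
      exists d. split; auto. intros h Hh.
      specialize (Hdd (u1 + h) ltac:(apply Rabs_def1; lra)). apply Rabs_def2 in Hdd. lra.
    + assert (HD : D j u1 <= 0).
      { apply Hmax; auto; try lra. unfold mg in Heq. rewrite HG in Heq. unfold G in Heq. lra. }
      destruct (neg_deriv _ _ _ (HdG j u1 Hj ltac:(lra)) ltac:(lra)) as [d [Hd0 Hdd]].
      exists d. split; auto. intros h Hh. specialize (Hdd h Hh). lra.
  - set (h := Rmin d (b - u1) / 2).
    assert (Hh : 0 < h) by (unfold h; apply Rdiv_lt_0_compat; [apply Rmin_pos|]; lra).
    assert (Hh2 : h < d) by (unfold h; generalize (Rmin_l d (b - u1)); lra).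
    assert (Hh3 : h < b - u1) by (unfold h; generalize (Rmin_r d (b - u1)); lra).
    assert (u1 + h <= u1); [|lra].
    apply Hub. split. lra. unfold mg. apply mx_le.
    apply Hdd; auto. intros j Hj; apply Hdd; auto.
Qed.

Lemma MP_rev (F D : nat -> R -> R) (L : list nat) (j0 : nat) (a b : R) :
  In j0 L -> a <= b ->
  (forall j u, In j L -> a <= u <= b -> derivable_pt_lim (F j) u (D j u)) ->
  (forall j u, In j L -> a <= u <= b -> F j u = mx (fun i => F i u) L j0 -> 0 <= D j u) ->
  mx (fun i => F i a) L j0 <= mx (fun i => F i b) L j0.
Proof.
  intros Hj0 Hab Hd Hmax.
  apply (MP (fun j w => F j (- w)) (fun j w => - D j (- w)) L j0 (- b) (- a)) in Hj0.
  - rewrite !Ropp_involutive in Hj0. exact Hj0.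
  - lra.
  - intros j u Hj Hu.
    replace (- D j (- u)) with (D j (- u) * (-1)) by ring.
    apply (derivable_pt_lim_comp Ropp (F j) u (-1) (D j (- u))).
    + apply is_derive_Reals. auto_derive; auto; ring.
    + apply Hd; auto; lra.
  - intros j u Hj Hu E. assert (0 <= D j (-u)); [|lra]. apply Hmax; auto; lra.
Qed.

Lemma const_of_d0 f a b : a <= b -> (forall u, a <= u <= b -> derivable_pt_lim f u 0) -> f b = f a.
Proof.
  intros Hab Hd.
  assert (H1 := MP (fun _ u => f u) (fun _ _ => 0) (0%nat :: nil) 0%nat a b (or_introl eq_refl) Hab
     ltac:(intros; apply Hd; auto) ltac:(intros; lra)).
  assert (H2 := MP_rev (fun _ u => f u) (fun _ _ => 0) (0%nat :: nil) 0%nat a b (or_introl eq_refl) Hab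
     ltac:(intros; apply Hd; auto) ltac:(intros; lra)).
  rewrite !mx_single in H1, H2. lra.
Qed.

Lemma SP (F D : nat -> R -> R) (K : nat) (s t c : R) :
  (1 <= K)%nat -> s < t -> 0 < c ->
  (forall j u, In j (seq 1 K) -> s < u < t -> derivable_pt_lim (F j) u (D j u)) ->
  (forall u, s < u < t -> F 1%nat u = 0) ->
  (forall u, s < u < t -> mx (fun i => F i u) (seq 1 K) 1 = c) ->
  (forall j u, (2 <= j <= K)%nat -> s < u < t -> F j u = c -> F (j-1)%nat u < c -> D j u < 0) ->
  False.
Proof.
  intros HK Hst Hc Hd H1 Hmx Hneg.
  assert (H1K : In 1%nat (seq 1 K)) by (apply in_seq; lia).
  assert (Hdesc : forall u, s < u < t -> forall m, (1 <= m <= K)%nat -> F m u = c ->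
     exists j, (2 <= j <= m)%nat /\ F j u = c /\ F (j-1)%nat u < c).
  { intros u Hu m. induction m as [|m IH]; intros Hm Hf; [lia|].
    destruct (Nat.eq_dec m 0) as [->|Hm0].
    - rewrite H1 in Hf; auto. lra.
    - assert (Hle : F m u <= c).
      { rewrite <- (Hmx u Hu). apply (mx_ge (fun i => F i u)). apply in_seq; lia. }
      destruct Hle as [Hlt|Heq].
      + exists (S m). replace (S m - 1)%nat with m by lia. split; [lia|auto].
      + destruct (IH ltac:(lia) Heq) as [j [Hj R]]. exists j; split; [lia|auto]. }
  assert (Hmain : forall n (S : list nat) u, (length S <= n)%nat -> s < u < t ->
            (forall j, In j (seq 1 K) -> F j u = c -> In j S) -> False).
  { induction n as [|n IH]; intros S u HS Hu HI.
    - destruct (mx_att' (fun i => F i u) (seq 1 K) 1 H1K) as [j [Hj E]].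
      rewrite Hmx in E; auto. specialize (HI j Hj (eq_sym E)).
      destruct S; simpl in *; [auto|lia].
    - destruct (mx_att' (fun i => F i u) (seq 1 K) 1 H1K) as [j1 [Hj1 E]].
      rewrite Hmx in E; auto. apply in_seq in Hj1.
      destruct (Hdesc u Hu j1 ltac:(lia) (eq_sym E)) as [j [Hj [Hfj Hfj1]]].
      assert (HjL : In j (seq 1 K)) by (apply in_seq; lia).
      assert (HD : D j u < 0) by (apply Hneg; auto; lia).
      assert (HjS : In j S) by auto.
      set (S' := remove Nat.eq_dec j S).
      assert (HS' : (length S' <= n)%nat) by (assert (H := remove_length_lt Nat.eq_dec S j HjS); unfold S'; lia).
      destruct (fin_delta (seq 1 K) (fun i d => forall h, 0 < h < d -> F i (u + h) = c -> In i S'))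
        as [d [Hd0 Hdd]].
      + intros i d d' Hd' P h Hh. apply P. lra.
      + intros i Hi. destruct (Nat.eq_dec i j) as [->|Hne].
        * destruct (neg_deriv _ _ _ (Hd j u HjL Hu) HD) as [d [Hd1 Hdd]].
          exists d. split; auto. intros h Hh E2. specialize (Hdd h Hh). lra.
        * assert (Hle : F i u <= c).
          { rewrite <- (Hmx u Hu). apply (mx_ge (fun i => F i u)). auto. }
          destruct Hle as [Hlt|Heq].
          -- destruct (dpl_cont _ _ _ (Hd i u Hi Hu) (c - F i u) ltac:(lra)) as [d [Hd1 Hdd]].
             exists d. split; auto. intros h Hh E2.
             specialize (Hdd (u + h) ltac:(apply Rabs_def1; lra)). apply Rabs_def2 in Hdd. lra.
          -- exists 1. split; [lra|]. intros h Hh E2. unfold S'. apply in_in_remove; auto.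
      + set (h := Rmin d (t - u) / 2).
        assert (Hh : 0 < h) by (unfold h; apply Rdiv_lt_0_compat; [apply Rmin_pos|]; lra).
        assert (Hh2 : h < d) by (unfold h; generalize (Rmin_l d (t - u)); lra).
        assert (Hh3 : h < t - u) by (unfold h; generalize (Rmin_r d (t - u)); lra).
        apply (IH S' (u + h) HS' ltac:(lra)).
        intros i Hi Ei. apply (Hdd i Hi h); auto. }
  apply (Hmain (length (seq 1 K)) (seq 1 K) ((s + t) / 2) (le_n _) ltac:(lra)). auto.
Qed.

Definition rc (f : R -> R) (a : R) : Prop :=
  forall e, 0 < e -> exists d, 0 < d /\ forall v, a <= v < a + d -> Rabs (f v - f a) < e.

Lemma rd_rc f l : is_right_derive f 0 l -> rc f 0.
Proof.
  intros H e He. unfold is_right_derive, filterlim, filter_le, filtermap in H.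
  destruct (H _ (locally_ball l (mkposreal 1 Rlt_0_1))) as [d Hd]. simpl in Hd.
  assert (Hl : 0 < Rabs l + 1) by (generalize (Rabs_pos l); lra).
  exists (Rmin d (e / (Rabs l + 1))). split. apply Rmin_pos. apply cond_pos. apply Rdiv_lt_0_compat; auto.
  intros v Hv. destruct (Req_dec v 0) as [->|Hne]. rewrite Rminus_diag, Rabs_R0; lra.
  assert (Hv1 : v < d) by (generalize (Rmin_l d (e / (Rabs l + 1))); lra).
  assert (Hv2 : v < e / (Rabs l + 1)) by (generalize (Rmin_r d (e / (Rabs l + 1))); lra).
  specialize (Hd v). replace (0 + v) with v in Hd by ring.
  assert (Hb := alg_bound (f v - f 0) v l Hne (Hd ltac:(change (Rabs (v - 0) < d); rewrite Rminus_0_r, Rabs_pos_eq; lra) ltac:(lra))).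
  rewrite (Rabs_pos_eq v) in Hb by lra.
  eapply Rlt_trans. exact Hb.
  apply (Rmult_lt_compat_l (Rabs l + 1)) in Hv2; auto.
  replace ((Rabs l + 1) * (e / (Rabs l + 1))) with e in Hv2 by (field; lra). exact Hv2.
Qed.

Lemma rc_opp f a : rc f a -> rc (fun v => - f v) a.
Proof.
  intros H e He. destruct (H e He) as [d [Hd Hdd]]. exists d; split; auto.
  intros v Hv. replace (- f v - - f a) with (- (f v - f a)) by ring. rewrite Rabs_Ropp; auto.
Qed.

Lemma Rbar_lt_le_trans' (v t : R) (T : Rbar) : v <= t -> Rbar_lt t T -> Rbar_lt v T.
Proof. intros H1 H2. destruct T; simpl in *; auto; lra. Qed.

Lemma mono_gen (T : Rbar) (F D : nat -> R -> R) (L : list nat) (j0 : nat) :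
  In j0 L ->
  (forall j u, In j L -> 0 < u -> Rbar_lt u T -> derivable_pt_lim (F j) u (D j u)) ->
  (forall j, In j L -> rc (F j) 0) ->
  (forall j u, In j L -> 0 < u -> Rbar_lt u T -> F j u = mx (fun i => F i u) L j0 -> D j u <= 0) ->
  forall s t, 0 <= s -> s <= t -> Rbar_lt t T ->
  mx (fun i => F i t) L j0 <= mx (fun i => F i s) L j0.
Proof.
  intros Hj0 Hd Hrc Hmax.
  assert (Hpos : forall s t, 0 < s -> s <= t -> Rbar_lt t T ->
     mx (fun i => F i t) L j0 <= mx (fun i => F i s) L j0).
  { intros s t Hs Hst Ht. apply (MP F D); auto; try lra.
    - intros j u Hj Hu. apply Hd; auto; [lra|]. apply (Rbar_lt_le_trans' u t); tauto.
    - intros j u Hj Hu. apply Hmax; auto; [lra|]. apply (Rbar_lt_le_trans' u t); tauto. }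
  intros s t Hs Hst Ht. destruct Hs as [Hs|<-]; [apply Hpos; auto|].
  destruct Hst as [Ht0|<-]; [|lra].
  destruct (Rle_lt_dec (mx (fun i => F i t) L j0) (mx (fun i => F i 0) L j0)) as [|Hc]; auto.
  exfalso. set (e := mx (fun i => F i t) L j0 - mx (fun i => F i 0) L j0).
  destruct (fin_delta L (fun j d => forall v, 0 <= v < 0 + d -> Rabs (F j v - F j 0) < e))
    as [d [Hd0 Hdd]].
  - intros j d d' Hd' P v Hv. apply P. lra.
  - intros j Hj. apply Hrc; auto. unfold e; lra.
  - set (v := Rmin d t / 2).
    assert (Hv : 0 < v) by (unfold v; apply Rdiv_lt_0_compat; [apply Rmin_pos|]; lra).
    assert (Hv2 : v < d) by (unfold v; generalize (Rmin_l d t); lra).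
    assert (Hv3 : v < t) by (unfold v; generalize (Rmin_r d t); lra).
    assert (A := Hpos v t Hv ltac:(lra) Ht).
    assert (B : mx (fun i => F i v) L j0 < mx (fun i => F i 0) L j0 + e).
    { apply mx_lt.
      - specialize (Hdd j0 Hj0 v ltac:(lra)). apply Rabs_def2 in Hdd.
        assert (F j0 0 <= mx (fun i => F i 0) L j0) by apply (mx_ge0 (fun i => F i 0)). lra.
      - intros j Hj. specialize (Hdd j Hj v ltac:(lra)). apply Rabs_def2 in Hdd.
        assert (F j 0 <= mx (fun i => F i 0) L j0) by (apply (mx_ge (fun i => F i 0)); auto). lra. }
    unfold e in B. lra.
Qed.

Definition Dd k (xi : R -> nat -> R) v j : R :=
  if andb (Nat.leb 2 j) (Nat.leb j k)
  then -(bcoef k (xi v) j + Defs.sigma k (j-1)) *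
       (2 * bcoef k (xi v) j - bcoef k (xi v) (j-1) - bcoef k (xi v) (S j))
  else 0.

Lemma case_in k j : (2 <= j <= k)%nat -> andb (Nat.leb 2 j) (Nat.leb j k) = true.
Proof. intros H. apply Bool.andb_true_iff; split; apply Nat.leb_le; lia. Qed.

Lemma case_in' k j : andb (Nat.leb 2 j) (Nat.leb j k) = true -> (2 <= j <= k)%nat.
Proof. intros H. apply Bool.andb_true_iff in H as [H1 H2]. apply Nat.leb_le in H1, H2. lia. Qed.

Lemma bcoef_in k x j : (2 <= j <= k)%nat ->
  bcoef k x j = Defs.sigma k (j-1) * (exp (- (x j - x (j - 1)%nat)) - 1).
Proof. intros H. unfold bcoef. rewrite case_in; auto. Qed.

Lemma bcoef_out k x j : andb (Nat.leb 2 j) (Nat.leb j k) = false -> bcoef k x j = 0.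
Proof. intros H. unfold bcoef. rewrite H; auto. Qed.

Lemma Dd_in k xi v j : (2 <= j <= k)%nat -> Dd k xi v j =
  -(bcoef k (xi v) j + Defs.sigma k (j-1)) *
       (2 * bcoef k (xi v) j - bcoef k (xi v) (j-1) - bcoef k (xi v) (S j)).
Proof. intros H. unfold Dd. rewrite case_in; auto. Qed.

Lemma Dd_out k xi v j : ~ (2 <= j <= k)%nat -> Dd k xi v j = 0.
Proof. intros H. unfold Dd. destruct (andb _ _) eqn:E; auto. apply case_in' in E. tauto. Qed.

Lemma bcoef_out' k x j : ~ (2 <= j <= k)%nat -> bcoef k x j = 0.
Proof. intros H. unfold bcoef. destruct (andb _ _) eqn:E; auto. apply case_in' in E. tauto. Qed.

Lemma sigma_pos k j : (2 <= j <= k)%nat -> 0 < Defs.sigma k (j-1).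
Proof.
  intros H. unfold Defs.sigma.
  assert (1 <= INR (j-1)) by (replace 1 with (INR 1) by reflexivity; apply le_INR; lia).
  assert (INR (S (j-1)) <= INR k) by (apply le_INR; lia). rewrite S_INR in *.
  apply Rdiv_lt_0_compat; [|lra]. apply Rmult_lt_0_compat; lra.
Qed.

Lemma sigma_le k j : (2 <= j <= k)%nat -> Defs.sigma k (j-1) <= INR k * INR k.
Proof.
  intros H. unfold Defs.sigma.
  assert (0 <= INR (j-1)) by apply pos_INR.
  assert (INR (j-1) <= INR k) by (apply le_INR; lia).
  nra.
Qed.

Lemma bsig_pos k x j : (2 <= j <= k)%nat -> 0 < bcoef k x j + Defs.sigma k (j-1).
Proof.
  intros H. rewrite bcoef_in; auto. assert (Hs := sigma_pos k j H).
  assert (Hexp := exp_pos (- (x j - x (j - 1)%nat))). nra.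
Qed.

Lemma deriv_comp_b (s : R) (x y : R -> R) v dx dy : is_derive x v dx -> is_derive y v dy ->
  is_derive (fun w => s * (exp (-(x w - y w)) - 1)) v (s * (exp (-(x v - y v)) * -(dx - dy))).
Proof.
  intros Hx Hy. auto_derive.
  { repeat split; eexists; eauto. }
  replace (Derive (fun x0 : R => x x0) v) with dx by (symmetry; apply is_derive_unique; auto).
  replace (Derive (fun x0 : R => y x0) v) with dy by (symmetry; apply is_derive_unique; auto).
  replace (x v + - y v) with (x v - y v) by ring. ring.
Qed.

Lemma b_deriv k xi T (Hsol : is_solution k xi T) j v : 0 < v -> Rbar_lt v T ->
  derivable_pt_lim (fun w => bcoef k (xi w) j) v (Dd k xi v j).
Proof.
  intros Hv HvT. destruct (andb (Nat.leb 2 j) (Nat.leb j k)) eqn:Hc.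
  - apply case_in' in Hc.
    assert (Hx : is_derive (fun s => xi s j) v (rhs k (xi v) j)).
    { apply (proj2 (Hsol j ltac:(lia))); auto. }
    assert (Hy : is_derive (fun s => xi s (j-1)%nat) v (rhs k (xi v) (j-1))).
    { apply (proj2 (Hsol (j-1)%nat ltac:(lia))); auto. }
    apply is_derive_Reals.
    apply (is_derive_ext (fun w => Defs.sigma k (j-1) * (exp (-(xi w j - xi w (j-1)%nat)) - 1))).
    { intro w. rewrite bcoef_in; auto. }
    replace (Dd k xi v j) with (Defs.sigma k (j-1) * (exp (-(xi v j - xi v (j-1)%nat)) *
       -(rhs k (xi v) j - rhs k (xi v) (j-1)))).
    apply (deriv_comp_b _ (fun w => xi w j) (fun w => xi w (j-1)%nat) v _ _ Hx Hy).
    rewrite Dd_in; auto. unfold rhs. replace (S (j-1)) with j by lia.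
    rewrite (bcoef_in k (xi v) j Hc). ring.
  - unfold Dd. rewrite Hc.
    apply is_derive_Reals.
    apply (is_derive_ext (fun _ => 0)).
    { intro w. rewrite bcoef_out; auto. }
    apply (is_derive_const (K := R_AbsRing) (V := R_NormedModule) 0 v).
Qed.

Lemma xi_rc k xi T (Hsol : is_solution k xi T) i : (1 <= i <= k)%nat -> rc (fun w => xi w i) 0.
Proof. intros H. apply (rd_rc _ _ (proj1 (Hsol i H))). Qed.

Lemma b_rc k xi T (Hsol : is_solution k xi T) j : rc (fun w => bcoef k (xi w) j) 0.
Proof.
  destruct (andb (Nat.leb 2 j) (Nat.leb j k)) eqn:Hc.
  - apply case_in' in Hc. intros e He.
    set (g := fun z => Defs.sigma k (j-1) * (exp (- z) - 1)).
    set (z0 := xi 0 j - xi 0 (j-1)%nat).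
    assert (Hg : derivable_pt_lim g z0 (Defs.sigma k (j-1) * (- exp (- z0)))).
    { apply is_derive_Reals. unfold g. auto_derive; auto. ring. }
    destruct (dpl_cont _ _ _ Hg e He) as [dg [Hdg Hg2]].
    destruct (xi_rc k xi T Hsol j ltac:(lia) (dg/2) ltac:(lra)) as [d1 [Hd1 H1]].
    destruct (xi_rc k xi T Hsol (j-1) ltac:(lia) (dg/2) ltac:(lra)) as [d2 [Hd2 H2]].
    exists (Rmin d1 d2). split. apply Rmin_pos; auto.
    intros w Hw. rewrite !bcoef_in; auto.
    specialize (H1 w ltac:(generalize (Rmin_l d1 d2); lra)).
    specialize (H2 w ltac:(generalize (Rmin_r d1 d2); lra)).
    simpl in H1, H2. apply Rabs_def2 in H1, H2.
    apply (Hg2 (xi w j - xi w (j-1)%nat)). unfold z0. apply Rabs_def1; lra.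
  - intros e He. exists 1. split; [lra|]. intros w Hw. rewrite !bcoef_out; auto.
    rewrite Rminus_diag, Rabs_R0; auto.
Qed.

Lemma Bmax_mx k x : Bmax k x = mx (fun i => bcoef k x i) (seq 1 (S k)) 1.
Proof. reflexivity. Qed.
Lemma bmin_mx k x : bmin k x = - mx (fun i => - bcoef k x i) (seq 1 (S k)) 1.
Proof. unfold bmin. apply (min_mx (bcoef k x)). Qed.
Lemma b1 k x : bcoef k x 1 = 0.
Proof. apply bcoef_out'; lia. Qed.
Lemma bSk k x : bcoef k x (S k) = 0.
Proof. apply bcoef_out'; lia. Qed.
Lemma in1 k : In 1%nat (seq 1 (S k)).
Proof. apply in_seq; lia. Qed.

Lemma mono_B k xi T (Hsol : is_solution k xi T) :
  forall s t, 0 <= s -> s <= t -> Rbar_lt t T -> Bmax k (xi t) <= Bmax k (xi s).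
Proof.
  intros s t Hs Hst Ht. rewrite !Bmax_mx.
  apply (mono_gen T (fun j u => bcoef k (xi u) j) (fun j u => Dd k xi u j)); auto.
  - apply in1.
  - intros j u _ Hu HuT. apply (b_deriv k xi T); auto.
  - intros j _. apply (b_rc k xi T Hsol).
  - intros j u Hj Hu HuT E. apply in_seq in Hj.
    destruct (Compare_dec.le_lt_dec 2 j); [destruct (Compare_dec.le_lt_dec j k)|].
    + rewrite Dd_in by lia.
      assert (A1 := mx_ge (fun i => bcoef k (xi u) i) (seq 1 (S k)) 1 (j-1) ltac:(apply in_seq; lia)).
      assert (A2 := mx_ge (fun i => bcoef k (xi u) i) (seq 1 (S k)) 1 (S j) ltac:(apply in_seq; lia)).
      cbv beta in A1, A2. rewrite <- E in A1, A2.
      assert (P := bsig_pos k (xi u) j ltac:(lia)).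
      assert (0 <= 2 * bcoef k (xi u) j - bcoef k (xi u) (j - 1) - bcoef k (xi u) (S j)) by lra.
      nra.
    + rewrite Dd_out by lia; lra.
    + rewrite Dd_out by lia; lra.
Qed.

Lemma mono_b k xi T (Hsol : is_solution k xi T) :
  forall s t, 0 <= s -> s <= t -> Rbar_lt t T -> - bmin k (xi t) <= - bmin k (xi s).
Proof.
  intros s t Hs Hst Ht. rewrite !bmin_mx, !Ropp_involutive.
  apply (mono_gen T (fun j u => - bcoef k (xi u) j) (fun j u => - Dd k xi u j)); auto.
  - apply in1.
  - intros j u _ Hu HuT. apply (derivable_pt_lim_opp (fun w => bcoef k (xi w) j)).
    apply (b_deriv k xi T); auto.
  - intros j _. apply rc_opp, (b_rc k xi T Hsol).
  - intros j u Hj Hu HuT E. apply in_seq in Hj.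
    destruct (Compare_dec.le_lt_dec 2 j); [destruct (Compare_dec.le_lt_dec j k)|].
    + rewrite Dd_in by lia.
      assert (A1 := mx_ge (fun i => - bcoef k (xi u) i) (seq 1 (S k)) 1 (j-1) ltac:(apply in_seq; lia)).
      assert (A2 := mx_ge (fun i => - bcoef k (xi u) i) (seq 1 (S k)) 1 (S j) ltac:(apply in_seq; lia)).
      cbv beta in A1, A2. rewrite <- E in A1, A2.
      assert (P := bsig_pos k (xi u) j ltac:(lia)).
      assert (2 * bcoef k (xi u) j - bcoef k (xi u) (j - 1) - bcoef k (xi u) (S j) <= 0) by lra.
      nra.
    + rewrite Dd_out by lia; lra.
    + rewrite Dd_out by lia; lra.
Qed.

Lemma eq_of_b0 k x : (forall j, (2 <= j <= k)%nat -> bcoef k x j = 0) ->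
  forall i, (1 <= i <= k)%nat -> x i = x 1%nat.
Proof.
  intros H. induction i as [|i IH]; intros Hi; [lia|].
  destruct (Nat.eq_dec i 0) as [->|Hi0]; [reflexivity|].
  rewrite <- IH by lia.
  assert (Hb := H (S i) ltac:(lia)). rewrite bcoef_in in Hb by lia.
  assert (Hs := sigma_pos k (S i) ltac:(lia)).
  replace (S i - 1)%nat with i in * by lia.
  assert (He : exp (- (x (S i) - x i)) = exp 0).
  { rewrite exp_0. apply Rmult_integral in Hb. destruct Hb; lra. }
  apply exp_inv in He. lra.
Qed.

Lemma vsum_const_gen x c : forall n a, (forall i, (a <= i < a + n)%nat -> x i = c) ->
  fold_right Rplus 0 (map x (seq a n)) = INR n * c.
Proof.
  induction n as [|n IH]; intros a H; simpl; [ring|].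
  rewrite (IH (S a)) by (intros; apply H; lia). rewrite H by lia.
  destruct n; simpl; ring.
Qed.

Lemma crit k (hk : (2 <= k)%nat) x : vsum k x = 0 ->
  (forall j, (2 <= j <= k)%nat -> bcoef k x j = 0) -> forall i, (1 <= i <= k)%nat -> x i = 0.
Proof.
  intros Hs Hb.
  assert (He := eq_of_b0 k x Hb).
  assert (Hv : vsum k x = INR k * x 1%nat).
  { unfold vsum. apply vsum_const_gen. intros; apply He; lia. }
  assert (0 < INR k) by (apply lt_0_INR; lia).
  assert (x 1%nat = 0) by (rewrite Hv in Hs; apply Rmult_integral in Hs; destruct Hs; lra).
  intros i Hi. rewrite He; auto.
Qed.

Lemma rc_const f u : rc f 0 -> 0 < u -> (forall v, 0 < v <= u -> f v = f u) -> f 0 = f u.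
Proof.
  intros H Hu Hv. destruct (Req_dec (f 0) (f u)) as [|Hne]; auto. exfalso.
  assert (He : 0 < Rabs (f u - f 0)) by (apply Rabs_pos_lt; lra).
  destruct (H _ He) as [d [Hd Hdd]].
  set (v := Rmin d u / 2).
  assert (0 < v) by (unfold v; apply Rdiv_lt_0_compat; [apply Rmin_pos|]; lra).
  assert (v < d) by (unfold v; generalize (Rmin_l d u); lra).
  assert (v < u) by (unfold v; generalize (Rmin_r d u); lra).
  specialize (Hdd v ltac:(lra)). rewrite Hv in Hdd by lra. lra.
Qed.

Lemma zero_all k (hk : (2 <= k)%nat) xi T (Hsol : is_solution k xi T) :
  vsum k (xi 0) = 0 ->
  (forall u, 0 <= u -> Rbar_lt u T -> forall j, bcoef k (xi u) j = 0) ->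
  Rbar_lt 0 T ->
  forall u, 0 <= u -> Rbar_lt u T -> forall i, (1 <= i <= k)%nat -> xi u i = 0.
Proof.
  intros Hs Hb HT.
  assert (H0 : forall i, (1 <= i <= k)%nat -> xi 0 i = 0).
  { apply crit; auto. intros j _. apply Hb; auto; lra. }
  intros u Hu HuT i Hi. destruct Hu as [Hu|<-]; [|auto].
  rewrite <- (H0 i Hi).
  symmetry. apply (rc_const (fun w => xi w i)); auto.
  - apply (xi_rc k xi T Hsol i Hi).
  - intros v Hv. symmetry. apply (const_of_d0 (fun w => xi w i)); [lra|].
    intros w Hw. assert (HwT : Rbar_lt w T) by (apply (Rbar_lt_le_trans' w u); tauto).
    apply is_derive_Reals.
    replace 0 with (rhs k (xi w) i).
    apply (proj2 (Hsol i Hi)); auto; lra.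
    unfold rhs. rewrite !Hb; auto; lra.
Qed.

Lemma dexp C g v d : derivable_pt_lim g v d ->
  derivable_pt_lim (fun w => exp (C * w) * g w) v (exp (C * v) * (C * g v + d)).
Proof.
  intros H. apply is_derive_Reals. apply is_derive_Reals in H.
  auto_derive. { first [eexists; eauto | split; [eexists; eauto| auto]]. }
  replace (Derive (fun x => g x) v) with d by (symmetry; apply is_derive_unique; auto). ring.
Qed.

Lemma back k (hk : (2 <= k)%nat) xi T (Hsol : is_solution k xi T) u s :
  0 < u -> u < s -> Rbar_lt s T -> (forall j, bcoef k (xi s) j = 0) ->
  forall j, bcoef k (xi u) j = 0.
Proof.
  intros Hu Hus HsT Hs0.
  assert (HuT : Rbar_lt u T) by (apply (Rbar_lt_le_trans' u s); auto; lra).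
  set (M0 := Bmax k (xi u) - bmin k (xi u)).
  assert (HB0 : 0 <= Bmax k (xi u)).
  { rewrite Bmax_mx. rewrite <- (b1 k (xi u)). apply (mx_ge0 (fun i => bcoef k (xi u) i)). }
  assert (Hb0 : 0 <= - bmin k (xi u)).
  { rewrite bmin_mx, Ropp_involutive.
    assert (A := mx_ge0 (fun i => - bcoef k (xi u) i) (seq 1 (S k)) 1). cbv beta in A.
    rewrite b1 in A. lra. }
  assert (HM0 : 0 <= M0) by (unfold M0; lra).
  assert (Hbd : forall v j, u <= v <= s -> bcoef k (xi v) j <= M0 /\ - bcoef k (xi v) j <= M0).
  { intros v j Hv.
    assert (HvT : Rbar_lt v T) by (apply (Rbar_lt_le_trans' v s); auto; lra).
    destruct (Compare_dec.le_lt_dec 1 j); [destruct (Compare_dec.le_lt_dec j (S k))|].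
    - assert (Hj : In j (seq 1 (S k))) by (apply in_seq; lia).
      assert (A1 := mx_ge (fun i => bcoef k (xi v) i) (seq 1 (S k)) 1 j Hj).
      assert (A2 := mx_ge (fun i => - bcoef k (xi v) i) (seq 1 (S k)) 1 j Hj).
      cbv beta in A1, A2. rewrite <- Bmax_mx in A1.
      assert (E2 : mx (fun i => - bcoef k (xi v) i) (seq 1 (S k)) 1 = - bmin k (xi v))
        by (rewrite bmin_mx; ring).
      rewrite E2 in A2.
      assert (m1 := mono_B k xi T Hsol u v ltac:(lra) ltac:(lra) HvT).
      assert (m2 := mono_b k xi T Hsol u v ltac:(lra) ltac:(lra) HvT).
      unfold M0; split; lra.
    - rewrite bcoef_out' by lia. lra.
    - rewrite bcoef_out' by lia. lra. }
  set (S0 := INR k * INR k).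
  assert (HS0 : 0 <= S0) by (unfold S0; assert (0 <= INR k) by apply pos_INR; nra).
  set (C := 4 * (M0 + S0)).
  set (P := fun j v => if Nat.leb j (S k) then exp (C * v) * bcoef k (xi v) j
                       else exp (C * v) * (- bcoef k (xi v) (j - S k))).
  set (DP := fun j v => if Nat.leb j (S k) then exp (C * v) * (C * bcoef k (xi v) j + Dd k xi v j)
                       else exp (C * v) * (C * (- bcoef k (xi v) (j - S k)) + - Dd k xi v (j - S k))).
  set (L2 := seq 1 (S k + S k)).
  assert (H1L : In 1%nat L2) by (apply in_seq; lia).
  assert (HMP := MP_rev P DP L2 1 u s H1L ltac:(lra)).
  assert (Hle : mx (fun i => P i u) L2 1 <= 0).
  { eapply Rle_trans. apply HMP.
    - intros j v Hj Hv. assert (HvT : Rbar_lt v T) by (apply (Rbar_lt_le_trans' v s); auto; lra).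
      unfold P, DP. destruct (Nat.leb j (S k)).
      + apply dexp. apply (b_deriv k xi T); auto; lra.
      + apply (dexp C (fun w => - bcoef k (xi w) (j - S k))).
        apply (derivable_pt_lim_opp (fun w => bcoef k (xi w) (j - S k))).
        apply (b_deriv k xi T); auto; lra.
    - intros j v Hj Hv E.
      assert (Hex := exp_pos (C * v)).
      assert (HP : forall i, In i L2 -> P i v <= P j v).
      { intros i Hi. rewrite E. apply (mx_ge (fun i => P i v)); auto. }
      assert (Hpm : forall i, (1 <= i <= S k)%nat ->
                bcoef k (xi v) i <= P j v / exp (C * v) /\ - bcoef k (xi v) i <= P j v / exp (C * v)).
      { intros i Hi.
        assert (A1 := HP i ltac:(apply in_seq; lia)).
        assert (A2 := HP (i + S k)%nat ltac:(apply in_seq; lia)).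
        unfold P at 1 in A1. unfold P at 1 in A2.
        replace (Nat.leb i (S k)) with true in A1 by (symmetry; apply Nat.leb_le; lia).
        replace (Nat.leb (i + S k) (S k)) with false in A2 by (symmetry; apply Nat.leb_gt; lia).
        replace (i + S k - S k)%nat with i in A2 by lia.
        split; apply (Rmult_le_reg_l (exp (C * v))); auto;
          replace (exp (C * v) * (P j v / exp (C * v))) with (P j v) by (field; lra); lra. }
      apply in_seq in Hj.
      assert (HC : 0 <= C) by (unfold C; lra).
      unfold DP. unfold P in Hpm. destruct (Nat.leb j (S k)) eqn:Hjk.
      + apply Nat.leb_le in Hjk.
        replace (exp (C * v) * bcoef k (xi v) j / exp (C * v)) with (bcoef k (xi v) j) in Hpm
          by (field; lra).
        apply Rmult_le_pos; [lra|].
        assert (Hm := Hpm j ltac:(lia)).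
        destruct (Compare_dec.le_lt_dec 2 j); [destruct (Compare_dec.le_lt_dec j k)|].
        * rewrite Dd_in by lia.
          assert (A1 := Hpm (j - 1)%nat ltac:(lia)). assert (A2 := Hpm (S j) ltac:(lia)).
          assert (Pp := bsig_pos k (xi v) j ltac:(lia)).
          assert (Ps := sigma_le k j ltac:(lia)). fold S0 in Ps.
          assert (Bd := proj1 (Hbd v j Hv)).
          set (p := bcoef k (xi v) j + Defs.sigma k (j - 1)) in *.
          set (m := bcoef k (xi v) j) in *.
          set (q := 2 * m - bcoef k (xi v) (j - 1) - bcoef k (xi v) (S j)).
          assert (0 <= q <= 4 * m) by (unfold q; lra).
          assert (p <= M0 + S0) by (unfold p; lra).
          assert ((M0 + S0 - p) * q >= 0) by nra.
          assert ((M0 + S0) * (4 * m - q) >= 0) by nra.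
          unfold C. nra.
        * rewrite Dd_out by lia. nra.
        * rewrite Dd_out by lia. nra.
      + apply Nat.leb_gt in Hjk.
        set (j' := (j - S k)%nat) in *.
        replace (exp (C * v) * - bcoef k (xi v) j' / exp (C * v)) with (- bcoef k (xi v) j') in Hpm
          by (field; lra).
        apply Rmult_le_pos; [lra|].
        assert (Hm := Hpm j' ltac:(unfold j'; lia)).
        destruct (Compare_dec.le_lt_dec 2 j'); [destruct (Compare_dec.le_lt_dec j' k)|].
        * rewrite Dd_in by lia.
          assert (A1 := Hpm (j' - 1)%nat ltac:(lia)). assert (A2 := Hpm (S j') ltac:(lia)).
          assert (Pp := bsig_pos k (xi v) j' ltac:(lia)).
          assert (Ps := sigma_le k j' ltac:(lia)). fold S0 in Ps.
          set (p := bcoef k (xi v) j' + Defs.sigma k (j' - 1)) in *.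
          set (m := - bcoef k (xi v) j') in *.
          set (q := 2 * bcoef k (xi v) j' - bcoef k (xi v) (j' - 1) - bcoef k (xi v) (S j')).
          assert (-4 * m <= q <= 0) by (unfold q, m in *; lra).
          assert (p <= S0) by (unfold p, m in *; lra).
          assert (p * (q + 4 * m) >= 0) by nra.
          assert ((S0 - p) * (4 * m) >= 0) by nra.
          unfold C. nra.
        * rewrite Dd_out by lia. nra.
        * rewrite Dd_out by lia. nra.
    - apply mx_le.
      + unfold P. simpl. rewrite Hs0. lra.
      + intros j Hj. unfold P. destruct (Nat.leb j (S k)); rewrite Hs0; lra. }
  intros j.
  destruct (Compare_dec.le_lt_dec 1 j); [destruct (Compare_dec.le_lt_dec j (S k))|].
  - assert (A1 := mx_ge (fun i => P i u) L2 1 j ltac:(apply in_seq; lia)).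
    assert (A2 := mx_ge (fun i => P i u) L2 1 (j + S k) ltac:(apply in_seq; lia)).
    cbv beta in A1, A2.
    assert (A1' := Rle_trans _ _ _ A1 Hle). assert (A2' := Rle_trans _ _ _ A2 Hle).
    clear A1 A2. rename A1' into A1. rename A2' into A2. unfold P in A1, A2.
    replace (Nat.leb j (S k)) with true in A1 by (symmetry; apply Nat.leb_le; lia).
    replace (Nat.leb (j + S k) (S k)) with false in A2 by (symmetry; apply Nat.leb_gt; lia).
    replace (j + S k - S k)%nat with j in A2 by lia.
    assert (Hex := exp_pos (C * u)). nra.
  - apply bcoef_out'; lia.
  - apply bcoef_out'; lia.
Qed.

Lemma b_range_zero k x : (forall j, (1 <= j <= S k)%nat -> bcoef k x j = 0) -> forall j, bcoef k x j = 0.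
Proof.
  intros H j. destruct (Compare_dec.le_lt_dec 1 j); [destruct (Compare_dec.le_lt_dec j (S k))|].
  apply H; lia. apply bcoef_out'; lia. apply bcoef_out'; lia.
Qed.

Lemma B_ge0 k x : 0 <= Bmax k x.
Proof. rewrite Bmax_mx. rewrite <- (b1 k x). apply (mx_ge0 (fun i => bcoef k x i)). Qed.
Lemma b_le0 k x : 0 <= - bmin k x.
Proof.
  rewrite bmin_mx, Ropp_involutive.
  assert (A := mx_ge0 (fun i => - bcoef k x i) (seq 1 (S k)) 1). cbv beta in A.
  rewrite b1 in A. lra.
Qed.
Lemma b_le_B k x j : bcoef k x j <= Bmax k x.
Proof.
  destruct (Compare_dec.le_lt_dec 1 j); [destruct (Compare_dec.le_lt_dec j (S k))|].
  - rewrite Bmax_mx. apply (mx_ge (fun i => bcoef k x i)). apply in_seq; lia.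
  - rewrite bcoef_out' by lia. apply B_ge0.
  - rewrite bcoef_out' by lia. apply B_ge0.
Qed.
Lemma b_ge_b k x j : - bcoef k x j <= - bmin k x.
Proof.
  destruct (Compare_dec.le_lt_dec 1 j); [destruct (Compare_dec.le_lt_dec j (S k))|].
  - rewrite bmin_mx, Ropp_involutive. apply (mx_ge (fun i => - bcoef k x i)). apply in_seq; lia.
  - rewrite bcoef_out' by lia. generalize (b_le0 k x). lra.
  - rewrite bcoef_out' by lia. generalize (b_le0 k x). lra.
Qed.

Lemma all_zero_from k (hk : (2 <= k)%nat) xi T (Hsol : is_solution k xi T) s :
  0 <= s -> Rbar_lt s T -> (forall j, bcoef k (xi s) j = 0) ->
  forall u, 0 <= u -> Rbar_lt u T -> forall j, bcoef k (xi u) j = 0.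
Proof.
  intros Hs HsT H0 u Hu HuT j.
  destruct (Rle_lt_dec s u) as [Hsu|Hus].
  - assert (m1 := mono_B k xi T Hsol s u Hs Hsu HuT).
    assert (m2 := mono_b k xi T Hsol s u Hs Hsu HuT).
    assert (Bs : Bmax k (xi s) <= 0).
    { rewrite Bmax_mx. apply mx_le. rewrite H0; lra. intros; rewrite H0; lra. }
    assert (bs : - bmin k (xi s) <= 0).
    { rewrite bmin_mx, Ropp_involutive. apply mx_le. rewrite H0; lra. intros; rewrite H0; lra. }
    assert (X1 := b_le_B k (xi u) j). assert (X2 := b_ge_b k (xi u) j). lra.
  - destruct Hu as [Hu|<-].
    + apply (back k hk xi T Hsol u s); auto.
    + assert (Hs' : 0 < s) by lra.
      rewrite (rc_const (fun w => bcoef k (xi w) j) s (b_rc k xi T Hsol j) Hs').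
      * apply H0.
      * intros v [Hv1 Hv2]. destruct Hv2 as [Hv2 | ->]; [|reflexivity].
        rewrite H0. apply (back k hk xi T Hsol v s); auto.
Qed.

Theorem proposition2p1 (k : nat) (hk : (2 <= k)%nat) :
  (* (a) the only critical point on the hyperplane sum xi_i = 0 is 0 *)
  (forall xi : nat -> R,
     vsum k xi = 0 ->
     (forall i, (1 <= i <= k)%nat -> rhs k xi i = 0) ->
     forall i, (1 <= i <= k)%nat -> xi i = 0)
  /\
  (* (b) monotonicity of B, -b, and strict decrease of B - b *)
  (forall (xi : R -> nat -> R) (Tinf : Rbar),
     is_maximal_solution k xi Tinf ->
     vsum k (xi 0) = 0 ->
     (forall s t, 0 <= s -> s <= t -> Rbar_lt t Tinf ->
        Bmax k (xi t) <= Bmax k (xi s) /\ - bmin k (xi t) <= - bmin k (xi s))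
     /\
     (~ (forall t, 0 <= t -> Rbar_lt t Tinf ->
           forall i, (1 <= i <= k)%nat -> xi t i = 0) ->
      forall s t, 0 <= s -> s < t -> Rbar_lt t Tinf ->
        Bmax k (xi t) - bmin k (xi t) < Bmax k (xi s) - bmin k (xi s))).
Proof.
  split.
  - intros x Hs Hr. apply crit; auto.
    assert (H : forall j, (1 <= j <= S k)%nat -> bcoef k x j = 0).
    { induction j as [|j IH]; intros Hj; [lia|].
      destruct (Nat.eq_dec j 0) as [->|Hj0]. apply b1.
      assert (E := Hr j ltac:(lia)). unfold rhs in E. rewrite IH in E by lia. lra. }
    intros j Hj; apply H; lia.
  - intros xi T [HT [Hsol _]] Hs0. split.
    + intros s t Hs Hst Ht. split; [apply (mono_B k xi T Hsol)| apply (mono_b k xi T Hsol)]; auto.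
    + intros Hnz s t Hs Hst HtT.
      assert (m1 := mono_B k xi T Hsol s t Hs ltac:(lra) HtT).
      assert (m2 := mono_b k xi T Hsol s t Hs ltac:(lra) HtT).
      destruct (Rlt_dec (Bmax k (xi t) - bmin k (xi t)) (Bmax k (xi s) - bmin k (xi s))) as [|Hn]; auto.
      exfalso.
      assert (HcB : forall u, s < u < t -> Bmax k (xi u) = Bmax k (xi s)).
      { intros u Hu. assert (HuT : Rbar_lt u T) by (apply (Rbar_lt_le_trans' u t); auto; lra).
        assert (a1 := mono_B k xi T Hsol s u Hs ltac:(lra) HuT).
        assert (a2 := mono_B k xi T Hsol u t ltac:(lra) ltac:(lra) HtT). lra. }
      assert (Hcb : forall u, s < u < t -> bmin k (xi u) = bmin k (xi s)).
      { intros u Hu. assert (HuT : Rbar_lt u T) by (apply (Rbar_lt_le_trans' u t); auto; lra).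
        assert (a1 := mono_b k xi T Hsol s u Hs ltac:(lra) HuT).
        assert (a2 := mono_b k xi T Hsol u t ltac:(lra) ltac:(lra) HtT). lra. }
      assert (HdT : forall u, s < u < t -> 0 < u /\ Rbar_lt u T).
      { intros u Hu. split; [lra|]. apply (Rbar_lt_le_trans' u t); auto; lra. }
      assert (X1 := B_ge0 k (xi s)). assert (X2 := b_le0 k (xi s)).
      destruct (Rlt_dec 0 (Bmax k (xi s))) as [HBp|HBn].
      { apply (SP (fun j u => bcoef k (xi u) j) (fun j u => Dd k xi u j) (S k) s t (Bmax k (xi s)));
          auto; try lia.
        - intros j u _ Hu. destruct (HdT u Hu). apply (b_deriv k xi T); auto.
        - intros j u Hj Hu E1 E2.
          destruct (Nat.eq_dec j (S k)) as [->|Hjk].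
          + rewrite bSk in E1. lra.
          + rewrite Dd_in by lia.
            assert (A := b_le_B k (xi u) (S j)). rewrite HcB in A by auto.
            assert (P := bsig_pos k (xi u) j ltac:(lia)).
            set (p := bcoef k (xi u) j + Defs.sigma k (j - 1)) in *.
            assert (0 < 2 * bcoef k (xi u) j - bcoef k (xi u) (j - 1) - bcoef k (xi u) (S j)) by lra.
            nra. }
      destruct (Rlt_dec 0 (- bmin k (xi s))) as [Hbp|Hbn].
      { apply (SP (fun j u => - bcoef k (xi u) j) (fun j u => - Dd k xi u j) (S k) s t (- bmin k (xi s)));
          auto; try lia.
        - intros j u _ Hu. destruct (HdT u Hu).
          apply (derivable_pt_lim_opp (fun w => bcoef k (xi w) j)). apply (b_deriv k xi T); auto.
        - intros u Hu. rewrite b1. lra.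
        - intros u Hu. rewrite <- (Hcb u Hu), bmin_mx. ring.
        - intros j u Hj Hu E1 E2.
          destruct (Nat.eq_dec j (S k)) as [->|Hjk].
          + rewrite bSk in E1. lra.
          + rewrite Dd_in by lia.
            assert (A := b_ge_b k (xi u) (S j)). rewrite Hcb in A by auto.
            assert (P := bsig_pos k (xi u) j ltac:(lia)).
            set (p := bcoef k (xi u) j + Defs.sigma k (j - 1)) in *.
            assert (2 * bcoef k (xi u) j - bcoef k (xi u) (j - 1) - bcoef k (xi u) (S j) < 0) by lra.
            nra. }
      apply Hnz. apply (zero_all k hk xi T Hsol Hs0); auto.
      apply (all_zero_from k hk xi T Hsol s Hs ltac:(apply (Rbar_lt_le_trans' s t); auto; lra)).
      intros j. assert (Y1 := b_le_B k (xi s) j). assert (Y2 := b_ge_b k (xi s) j). lra.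
Qed.
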